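(* Let $G=(V,E)$ be a graph with a partition of its vertex set into sets $V_1,\dots,V_t$ ($t$ a positive integer), each $V_i$ being a set of pairwise false twins. Let $m_i=|V_i|$ for $1\le i\le t$. Let $\Gamma$ be a finite Abelian group of order $m$ with $\sum_{i=1}^t m_i=m-1$. If $\Gamma^*$ can be partitioned into pairwise disjoint sets $S_1,\dots,S_t$ with $|S_i|=m_i$ and $\sum_{s\in S_i}s=0$ for every $i$, then $G$ has a $\Gamma^*$-distance magic labeling.
   Context: $\Gamma^*=\Gamma\setminus\{0\}$. In a graph $G=(V,E)$, a set $M\subseteq V$ is a module if $N(x)\setminus M=N(y)\setminus M$ for all $x,y\in M$. Two vertices $x,y$ are twins if $\{x,y\}$ is a module; they are false twins if moreover $\{x,y\}\notin E$ and true twins if $\{x,y\}\in E$ (every vertex is considered a false and true twin of itself). A $\Gamma^*$-distance magic labeling of $G$ (with $|V|=|\Gamma|-1$) is a bijection $\ell\colon V\to\Gamma^*$ such that the weight $w(v)=\sum_{u\in N(v)}\ell(u)$ is the same element of $\Gamma$ for all $v\in V$. *)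

(* Defs.v *)
From HB Require Import structures.
From mathcomp Require Import all_boot all_algebra.
Set Implicit Arguments. Unset Strict Implicit. Unset Printing Implicit Defensive.
Import GRing.Theory.
Local Open Scope ring_scope.

Definition simple_graph (V : finType) (e : rel V) : Prop :=
  symmetric e /\ irreflexive e.

Definition nbhd (V : finType) (e : rel V) (x : V) : {set V} := [set y | e x y].

Definition is_module (V : finType) (e : rel V) (M : {set V}) : Prop :=
  forall x y, x \in M -> y \in M -> nbhd e x :\: M = nbhd e y :\: M.

Definition false_twins (V : finType) (e : rel V) (x y : V) : Prop :=
  is_module e [set x; y] /\ ~~ e x y.

Definition pairwise_false_twins (V : finType) (e : rel V) (A : {set V}) : Prop :=
  forall x y, x \in A -> y \in A -> false_twins e x y.

Definition block_partition (T : finType) (t : nat) (P : 'I_t -> {set T})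
  (U : {set T}) : Prop :=
  [/\ forall i j, i != j -> [disjoint P i & P j],
      \bigcup_(i < t) P i = U &
      forall i, P i != set0].

Definition distance_magic_labeling (V : finType) (e : rel V)
  (G : finZmodType) (l : V -> G) : Prop :=
  [/\ injective l,
      forall v, l v != 0,
      forall g : G, g != 0 -> exists v, l v = g &
      exists w : G, forall v, \sum_(u | e v u) l u = w].

(* Main.v *)
Require Import Defs.
From HB Require Import structures.
From mathcomp Require Import all_boot all_algebra.
Import GRing.Theory.
Local Open Scope ring_scope.

Theorem proposition4p7 (V : finType) (e : rel V) (G : finZmodType)
  (t : nat) (Vp : 'I_t -> {set V}) (S : 'I_t -> {set G}) :
  simple_graph e ->
  (0 < t)%N ->
  block_partition Vp [set: V] ->
  (forall i, pairwise_false_twins e (Vp i)) ->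
  (\sum_(i < t) #|Vp i| = #|G| - 1)%N ->
  (forall i j, i != j -> [disjoint S i & S j]) ->
  \bigcup_(i < t) S i = [set g : G | g != 0] ->
  (forall i, #|S i| = #|Vp i|) ->
  (forall i, \sum_(s in S i) s = 0) ->
  exists l : V -> G, distance_magic_labeling e l.
Proof.
move=> [esym eirr] t0 [Vdis Vcov Vne] Vtw _ Sdis Scov Scard Ssum.
pose i0 : 'I_t := Ordinal t0.
pose blk (v : V) : 'I_t := odflt i0 [pick i | v \in Vp i].
have blkP v : v \in Vp (blk v).
  rewrite /blk; case: pickP => [//|H] /=.
  have : v \in \bigcup_(i < t) Vp i by rewrite Vcov inE.
  by case/bigcupP=> i _; rewrite H.
have blkU v i : v \in Vp i -> blk v = i.
  move=> vi; apply/eqP; apply/negPn/negP=> ne.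
  by move: (Vdis _ _ ne) => /disjoint_setI0 /setP /(_ v); rewrite !inE blkP vi.
pose l (v : V) : G := nth 0 (enum (S (blk v))) (index v (enum (Vp (blk v)))).
have szE i : size (enum (S i)) = size (enum (Vp i)) by rewrite -!cardE Scard.
have lidx v : (index v (enum (Vp (blk v))) < size (enum (S (blk v))))%N.
  by rewrite szE index_mem mem_enum blkP.
have lS v : l v \in S (blk v).
  by rewrite -mem_enum; apply: mem_nth.
have linj : injective l.
  move=> u v luv.
  have bi : blk u = blk v.
    apply/eqP; apply/negPn/negP=> ne.
    move: (Sdis _ _ ne) => /disjoint_setI0 /setP /(_ (l u)).
    by rewrite !inE lS luv lS.
  have hu : (index u (enum (Vp (blk v))) < size (enum (S (blk v))))%N.
    by rewrite szE index_mem mem_enum -bi blkP.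
  move: luv; rewrite /l bi => /eqP; rewrite nth_uniq ?enum_uniq //.
  move=> /eqP H.
  have : nth u (enum (Vp (blk v))) (index u (enum (Vp (blk v)))) =
         nth u (enum (Vp (blk v))) (index v (enum (Vp (blk v)))) by rewrite H.
  have mu : u \in enum (Vp (blk v)) by rewrite mem_enum -bi blkP.
  have mv : v \in enum (Vp (blk v)) by rewrite mem_enum blkP.
  by rewrite !nth_index.
have lnz v : l v != 0.
  have : l v \in \bigcup_(i < t) S i by apply/bigcupP; exists (blk v).
  by rewrite Scov inE.
have twin v x y i : x \in Vp i -> y \in Vp i -> e v x -> e v y.
  move=> xi yi evx.
  case: (Vtw i x y xi yi) => Hm nxy.
  have := Hm x y; rewrite !inE !eqxx orbT => /(_ isT isT) /setP /(_ v).
  rewrite !inE.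
  have vx : (v == x) = false by apply/negP=> /eqP vx; move: evx; rewrite vx eirr.
  have vy : (v == y) = false.
    by apply/negP=> /eqP vy; move: nxy; rewrite esym -vy evx.
  rewrite vx vy /= => H.
  have : e x v by rewrite esym.
  by rewrite H esym.
have imS i : l @: Vp i = S i.
  apply/eqP; rewrite eqEcard; apply/andP; split.
    by apply/subsetP=> g /imsetP [u ui ->]; rewrite -(blkU _ _ ui).
  by rewrite card_imset // Scard.
exists l; split=> //.
  move=> g gnz.
  have : g \in \bigcup_(i < t) S i by rewrite Scov inE.
  case/bigcupP=> i _ gi.
  by move: gi; rewrite -imS => /imsetP [u _ ->]; exists u.
exists 0 => v.
rewrite (partition_big blk xpredT) //=.
apply: big1 => i _.
case: (boolP [exists u in Vp i, e v u]).
  case/exists_inP=> u ui evu.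
  rewrite (eq_bigl (fun x => x \in Vp i)); last first.
    move=> x /=; apply/idP/idP => [/andP [_ /eqP <-]//|xi].
    by apply/andP; split; [exact: (twin v u x i ui xi evu) | apply/eqP/blkU].
  by rewrite -(big_imset id (in2W linj)) /= imS Ssum.
move=> /exists_inPn H.
apply: big_pred0 => x; apply/andP=> [[evx /eqP bx]].
by move: (H x); rewrite -bx blkP evx => /(_ isT).
Qed.
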